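(* Let $\mathcal G_{yz}$ with arrival distribution $\beta$ be obtained from $(\mathcal G_x,\alpha)$ by decomposing the node $x$ into $y$ and $z$. Let $W_{yz}$ be the FCFS Markov chain of $(\mathcal G_{yz},\beta)$. For each state (word) $w$ of $W_{yz}$ let $\mathcal M(w)$ be the set of words obtained from $w$ by replacing each occurrence of $y$ or $z$ in $w$ independently by $y$ or $z$ (so $\mathcal M(w)=\{w\}$ if $w$ contains neither $y$ nor $z$). Then $W_{yz}$ is ordinarily lumpable with respect to the partition $\{\mathcal M(w)\}$ of its state space, and the lumped Markov chain, after identifying $\mathcal M(w)$ with the word obtained from $w$ by replacing every $y$ and $z$ by $x$, is the FCFS Markov chain $W_x$ of $(\mathcal G_x,\alpha)$.
   Context: A matching model consists of a finite connected simple graph and an arrival distribution on its nodes with positive entries; in each time step an item of class $i$ arrives with probability $\alpha_i$ (independently over time). Under FCFS, the state is the word of unmatched item classes in order of arrival (no two letters adjacent in the graph); an arriving item of class $i$ deletes the oldest letter of the word that is a neighbour of $i$, and if there is none $i$ is appended at the end. Decomposition: given $\mathcal G_x=(\mathcal V,\xi)$ with node $x$ and arrival distribution $\alpha$, $\mathcal G_{yz}$ has node set $(\mathcal V\setminus\{x\})\cup\{y,z\}$ with $y,z$ new nodes; edges among $\mathcal V\setminus\{x\}$ are as in $\mathcal G_x$, each of $y$ and $z$ is adjacent exactly to the neighbours of $x$ in $\mathcal G_x$ (so $y,z$ are not adjacent), and $\beta_y>0$, $\beta_z>0$, $\beta_y+\beta_z=\alpha_x$, $\beta_i=\alpha_i$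 for $i\ne x$. A Markov chain with transition matrix $P$ is ordinarily lumpable with respect to a partition $\{A_v\}$ of its state space if for every pair of blocks $A_u,A_v$, $\sum_{j\in A_v}P(w,j)$ is the same for all $w\in A_u$. *)

(* Defs.v *)
From mathcomp Require Import all_boot all_order all_algebra.
Set Implicit Arguments. Unset Strict Implicit. Unset Printing Implicit Defensive.
Import Order.TTheory GRing.Theory Num.Theory.
Local Open Scope ring_scope.

Definition word_ok (T : eqType) (e : rel T) (w : seq T) : bool :=
  all (fun a => all (fun b => ~~ e a b) w) w.

(* FCFS dynamics: an arriving item of class [i] deletes the oldest letter of [w]
   that is a neighbour of [i]; if there is none, [i] is appended at the end. *)
Definition fcfs_step (T : eqType) (e : rel T) (i : T) (w : seq T) : seq T :=
  let k := find (e i) w in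
  if (k < size w)%N then take k w ++ drop k.+1 w else rcons w i.

Definition fcfs_P (R : pzRingType) (T : finType) (e : rel T) (a : T -> R)
    (w w' : seq T) : R :=
  \sum_(i : T) a i * (fcfs_step e i w == w')%:R.

(* Ordinary lumpability w.r.t. a partition of the state space [St] whose block
   containing a state [u] is given by the finite (duplicate-free) list [blk u]. *)
Definition ordinarily_lumpable (R : pzRingType) (S : eqType) (St : pred S)
    (blk : S -> seq S) (P : S -> S -> R) : Prop :=
  forall u v w1 w2, St u -> St v -> w1 \in blk u -> w2 \in blk u ->
    \sum_(j <- blk v) P w1 j = \sum_(j <- blk v) P w2 j.

(* Decomposition of node [x]: the nodes of G_yz are [option V], with
   y := Some x, z := None, and Some v (v <> x) the old node v.
   [split_col x] collapses y and z back to x. *)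
Definition split_col (V : Type) (x : V) (o : option V) : V :=
  if o is Some v then v else x.

(* Edges of G_yz: as in G_x among old nodes; y and z adjacent exactly to the
   neighbours of x (in particular not to each other, e being irreflexive). *)
Definition split_rel (V : Type) (e : rel V) (x : V) : rel (option V) :=
  fun a b => e (split_col x a) (split_col x b).

Fixpoint Mlist (T : eqType) (y z : T) (w : seq T) : seq (seq T) :=
  match w with
  | [::] => [:: [::]]
  | a :: w' =>
      if (a == y) || (a == z) then
        [seq y :: t | t <- Mlist y z w'] ++ [seq z :: t | t <- Mlist y z w']
      else [seq a :: t | t <- Mlist y z w']
  end.

(* Main.v *)
Require Import Defs.
From mathcomp Require Import all_boot all_order all_algebra.
Import Order.TTheory GRing.Theory Num.Theory.
Local Open Scope ring_scope.

Lemma sum_option (R : nmodType) (V : finType) (f : option V -> R) :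
  \sum_(i : option V) f i = f None + \sum_(v : V) f (Some v).
Proof.
rewrite (bigD1 None) //=; congr (_ + _).
rewrite (@reindex_omap _ _ _ _ _ (fun v : V => Some v) (fun o => o)) /=.
  by apply: eq_bigl => v; rewrite eqxx.
by case.
Qed.

Lemma mem_cons_map (T : eqType) (c b : T) (t : seq T) (L : seq (seq T)) :
  (b :: t \in [seq c :: s | s <- L]) = (b == c) && (t \in L).
Proof.
apply/mapP/andP => [[s sL [-> ->]]|[/eqP -> tL]]; first by split.
by exists t.
Qed.

Lemma nil_notin_map (T : eqType) (c : T) (L : seq (seq T)) :
  ([::] \in [seq c :: s | s <- L]) = false.
Proof. by apply/mapP => -[]. Qed.

Lemma Mlist_mem (V : eqType) (x : V) (u u' : seq (option V)) :
  (u' \in Mlist (Some x) None u) =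
  (map (split_col x) u' == map (split_col x) u).
Proof.
elim: u u' => [|a w IH] [|b t] //=.
- by case: ifP; rewrite ?mem_cat ?nil_notin_map.
- case: ifP => ha; rewrite ?mem_cat !mem_cons_map IH eqseq_cons.
  + have -> : split_col x a = x.
      by case: a ha => [v|] //=; rewrite orbF => /eqP [->].
    case: b => [v'|] /=; last by rewrite ?eqxx ?orbF.
    case: (eqVneq v' x) => [->|nv]; first by rewrite ?eqxx ?orbF.
    have -> : (Some v' == Some x) = false by apply/eqP => -[] /eqP; rewrite (negbTE nv).
    by rewrite orbF.
  + case: a ha => [v|] //= /negbT; rewrite orbF => hv.
    have hvx : v != x by apply: contra hv => /eqP ->.
    case: b => [v'|] /=.
      by rewrite (inj_eq (@Some_inj _)).
    by rewrite eq_sym (negbTE hvx).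
Qed.

Lemma Mlist_uniq (T : eqType) (y z : T) (u : seq T) :
  y != z -> uniq (Mlist y z u).
Proof.
move=> yz; elim: u => [|a w IH] //=.
case: ifP => _.
  have ic : forall c : T, injective (fun s : seq T => c :: s) by move=> ? ? ? [].
  rewrite cat_uniq !map_inj_uniq ?IH //= andbT.
  apply/hasPn => s /mapP [t _ ->]; apply/mapP => -[t' _ [ez _]].
  by move: yz; rewrite ez eqxx.
by rewrite map_inj_uniq //; move=> ? ? [].
Qed.

Lemma sum_eq_uniq (R : pzSemiRingType) (T : eqType) (s : T) (L : seq T) :
  uniq L -> \sum_(j <- L) ((s == j)%:R : R) = (s \in L)%:R.
Proof.
elim: L => [|a L IH] /=; first by rewrite big_nil.
move=> /andP [aL uL]; rewrite big_cons IH // in_cons.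
case: (eqVneq s a) => [->|] /=; last by rewrite add0r.
by rewrite (negbTE aL) addr0.
Qed.

Lemma map_step (V : eqType) (e : rel V) (x : V) i (w : seq (option V)) :
  map (split_col x) (fcfs_step (split_rel e x) i w) =
  fcfs_step e (split_col x i) (map (split_col x) w).
Proof.
rewrite /fcfs_step find_map size_map.
have -> : find (preim (split_col x) (e (split_col x i))) w =
          find (split_rel e x i) w by apply: eq_find.
case: ifP => _; first by rewrite map_cat map_take map_drop.
by rewrite map_rcons.
Qed.

Lemma word_ok_map (V : eqType) (e : rel V) (x : V) (u : seq (option V)) :
  word_ok (split_rel e x) u = word_ok e (map (split_col x) u).
Proof.
rewrite /word_ok all_map; apply: eq_all => a /=.
by rewrite all_map; apply: eq_all.
Qed.

Theorem mainTheorem11 (R : realFieldType) (V : finType) (e : rel V) (x : V)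
    (alpha : V -> R) (beta : option V -> R) :
  symmetric e -> irreflexive e -> (forall a b, connect e a b) ->
  (forall v, 0 < alpha v) -> \sum_(v : V) alpha v = 1 ->
  0 < beta (Some x) -> 0 < beta None -> beta (Some x) + beta None = alpha x ->
  (forall v, v != x -> beta (Some v) = alpha v) ->
  let eyz := split_rel e x in
  let col := split_col x in
  let M := Mlist (Some x) None in
  [/\ ordinarily_lumpable (word_ok eyz) M (fcfs_P eyz beta),
      (forall u, word_ok eyz u -> word_ok e (map col u)),
      (forall w', word_ok e w' -> exists2 u, word_ok eyz u & map col u = w'),
      (forall u u', word_ok eyz u -> word_ok eyz u' ->
         (map col u == map col u') = (u' \in M u))
    & (forall u v w, word_ok eyz u -> word_ok eyz v -> w \in M u ->
         \sum_(j <- M v) fcfs_P eyz beta w j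
         = fcfs_P e alpha (map col u) (map col v))].
Proof.
move=> _ _ _ _ _ _ _ hx hv eyz col M.
have key : forall u v w, w \in M u ->
    \sum_(j <- M v) fcfs_P eyz beta w j
    = fcfs_P e alpha (map col u) (map col v).
  move=> u v w; rewrite /M Mlist_mem => /eqP hw.
  rewrite /fcfs_P exchange_big /=.
  under eq_bigr => i _ do
    rewrite -mulr_sumr sum_eq_uniq ?Mlist_uniq // Mlist_mem map_step hw.
  rewrite sum_option /= (bigD1 x) //= [RHS](bigD1 x) //= addrA -mulrDl [beta None + _]addrC hx.
  congr (_ + _).
  by apply: eq_bigr => v' hv'; rewrite hv.
split.
- move=> u v w1 w2 _ _ h1 h2; by rewrite (key u v w1) // (key u v w2).
- by move=> u; rewrite word_ok_map.
- move=> w' ok; exists (map Some w'); last by rewrite -map_comp map_id.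
  by rewrite word_ok_map -map_comp map_id.
- by move=> u u' _ _; rewrite /M Mlist_mem eq_sym.
- by move=> u v w _ _; apply: key.
Qed.
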